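(* Let $G$ be a discrete group. Every proper weight function $\ell$ on $G$ is a slow conditionally negative type function.
   Context: A weight on $G$ is a conditionally negative type function $\ell:G\to[0,\infty)$ (symmetric, $\ell(e)=0$, strictly positive away from $e$) satisfying $\ell(st)\le\ell(s)+\ell(t)$ for all $s,t\in G$. It is proper if $\{g:\ell(g)\le m\}$ is finite for every $m$. A conditionally negative type function is slow if it is proper and for every fixed $g\in G$, $\ell(g^{-1}g')=\ell(g')+o(\ell(g')^{1/2})$ as $g'\to\infty$ (i.e. leaves every finite set). *)

(* Defs.v *)
From Stdlib Require Import Reals List.
Open Scope R_scope.

Record Group := {
  carrier :> Type;
  gmul : carrier -> carrier -> carrier;
  ginv : carrier -> carrier;
  gone : carrier;
  gmulA : forall x y z, gmul x (gmul y z) = gmul (gmul x y) z;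
  gmul1l : forall x, gmul gone x = x;
  gmul1r : forall x, gmul x gone = x;
  gmulVl : forall x, gmul (ginv x) x = gone;
  gmulVr : forall x, gmul x (ginv x) = gone
}.

Definition fsum (n : nat) (f : nat -> R) : R :=
  fold_right Rplus 0 (map f (seq 0 n)).

(* conditionally negative type function (with the paper's conventions:
   values in [0,oo), symmetric, vanishing at e, strictly positive away from e) *)
Definition cond_neg_type (G : Group) (l : G -> R) : Prop :=
  (forall g, 0 <= l g) /\
  (forall g, l (ginv G g) = l g) /\
  l (gone G) = 0 /\
  (forall g, g <> gone G -> 0 < l g) /\
  (forall (n : nat) (g : nat -> G) (c : nat -> R),
      fsum n c = 0 ->
      fsum n (fun i => fsum n (fun j => c i * c j * l (gmul G (ginv G (g i)) (g j)))) <= 0).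

Definition weight (G : Group) (l : G -> R) : Prop :=
  cond_neg_type G l /\ (forall s t, l (gmul G s t) <= l s + l t).

Definition finite_set (G : Group) (S : G -> Prop) : Prop :=
  exists L : list G, forall g, S g -> In g L.

Definition proper_fun (G : Group) (l : G -> R) : Prop :=
  forall m : R, finite_set G (fun g => l g <= m).

(* slow: proper, and for each g, l(g^-1 g') - l(g') = o(l(g')^(1/2)) as g'
   leaves every finite set (cofinite filter on G). *)
Definition slow (G : Group) (l : G -> R) : Prop :=
  cond_neg_type G l /\ proper_fun G l /\
  forall g : G, forall eps : R, 0 < eps ->
    exists F : list G, forall g' : G, ~ In g' F ->
      Rabs (l (gmul G (ginv G g) g') - l g') <= eps * sqrt (l g').

(* Main.v *)
Require Import Defs.
From Stdlib Require Import Reals List Lra.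
Open Scope R_scope.

Theorem lemma5p5 (G : Group) (l : G -> R) :
  weight G l -> proper_fun G l -> slow G l.
Proof.
  intros [Hc Hsub] Hp.
  split; [exact Hc|split; [exact Hp|]].
  destruct Hc as [H0 [Hsym _]].
  intros g eps Heps.
  set (a := l g).
  destruct (Hp ((a / eps) * (a / eps))) as [L HL].
  exists L. intros g' Hn.
  assert (Hgt : (a/eps)*(a/eps) < l g').
  { destruct (Rle_dec (l g') ((a/eps)*(a/eps))) as [h|h].
    - exfalso; apply Hn; apply HL; exact h.
    - lra. }
  assert (Ha : 0 <= a) by apply H0.
  assert (H1 : l (gmul G (ginv G g) g') <= a + l g').
  { unfold a; rewrite <- (Hsym g); apply Hsub. }
  assert (H2 : l g' <= a + l (gmul G (ginv G g) g')).
  { unfold a. replace g' with (gmul G g (gmul G (ginv G g) g')) at 1.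
    - apply Hsub.
    - rewrite gmulA, gmulVr, gmul1l; reflexivity. }
  assert (Hs : a / eps <= sqrt (l g')).
  { rewrite <- (sqrt_square (a/eps)).
    - apply sqrt_le_1_alt. lra.
    - apply Rmult_le_pos; [lra|]. left; apply Rinv_0_lt_compat; lra. }
  assert (Hb : a <= eps * sqrt (l g')).
  { replace a with (eps * (a/eps)) by (field; lra).
    apply Rmult_le_compat_l; lra. }
  apply Rabs_le; lra.
Qed.
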